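(* Let $G=(V,E,w)$ be a connected graph with uniform weights, $w_{ij}=1$ for all $\{i,j\}\in E$. Then \[ \frac{\mathrm{PROD}(G)}{\mathrm{OPT}(G)}\geq\frac13+\frac23\left(\frac{|E|}{2|E|+|V|}\right). \] Moreover, there exists a computational basis state $|s\rangle$, $s\in\{0,1\}^{|V|}$, whose energy $\langle s|H_G|s\rangle$ satisfies this inequality in place of $\mathrm{PROD}(G)$.
   Context: Qubits are placed on the vertices of $G$; with Pauli operators $X_i,Y_i,Z_i$ on qubit $i$, define $h_{ij}=\frac12(I-X_iX_j-Y_iY_j-Z_iZ_j)$ and $H_G=\sum_{\{i,j\}\in E} w_{ij}h_{ij}$. $\mathrm{OPT}(G)=\|H_G\|$ is its largest eigenvalue, and $\mathrm{PROD}(G)$ is the maximum of $\langle\phi|H_G|\phi\rangle$ over product states $\phi=\phi_1\otimes\cdots\otimes\phi_{|V|}$. *)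

(* Defs.v *)
From HB Require Import structures.
From mathcomp Require Import all_boot all_order all_algebra.
Set Implicit Arguments. Unset Strict Implicit. Unset Printing Implicit Defensive.
Import Order.TTheory GRing.Theory Num.Theory.
Local Open Scope ring_scope.

Section Heisenberg.
Variable C : numClosedFieldType.   (* the complex numbers (any algebraically closed numeric field) *)
Variable n : nat.                  (* qubits on vertices 'I_n *)

(* computational basis labels: s : 'I_n -> bool, with |0> = false, |1> = true *)
Definition basis_t := {ffun 'I_n -> bool}.
(* operators on (C^2)^{(x) n} as kernels on basis labels, vectors as functions *)
Definition op := basis_t -> basis_t -> C.
Definition vec := basis_t -> C.

(* single-qubit Pauli matrices, indexed (row, column) *)
Definition pauliX (a b : bool) : C := if a != b then 1 else 0.
Definition pauliY (a b : bool) : C :=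
  match a, b with
  | false, true => - 'i
  | true, false => 'i
  | _, _ => 0
  end.
Definition pauliZ (a b : bool) : C :=
  if a == b then (if a then -1 else 1) else 0.

Definition idop : op := fun x y => (x == y)%:R.

(* P_i Q_j : P on qubit i, Q on qubit j, identity elsewhere (i <> j) *)
Definition op2 (P Q : bool -> bool -> C) (i j : 'I_n) : op :=
  fun x y => P (x i) (y i) * Q (x j) (y j) *
             \prod_(k < n | (k != i) && (k != j)) (x k == y k)%:R.

Definition hterm (i j : 'I_n) : op :=
  fun x y => 2^-1 * (idop x y - op2 pauliX pauliX i j x y
                     - op2 pauliY pauliY i j x y - op2 pauliZ pauliZ i j x y).

(* edges of the simple graph e : each unordered edge {i,j} counted once as i < j *)
Definition edges (e : rel 'I_n) : {set 'I_n * 'I_n} :=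
  [set p : 'I_n * 'I_n | (p.1 < p.2)%N && e p.1 p.2].

Definition HG (e : rel 'I_n) : op :=
  fun x y => \sum_(p in edges e) hterm p.1 p.2 x y.

Definition apply (A : op) (v : vec) : vec := fun x => \sum_y A x y * v y.

Definition energy (A : op) (v : vec) : C :=
  \sum_x \sum_y (v x)^* * A x y * v y.

Definition is_eigenvalue (A : op) (lam : C) : Prop :=
  exists v : vec, (exists x, v x != 0) /\ forall x, apply A v x = lam * v x.

(* lam is the largest eigenvalue of A (OPT(G) = ||H_G|| for the PSD H_G) *)
Definition is_largest_eigenvalue (A : op) (lam : C) : Prop :=
  is_eigenvalue A lam /\ forall mu, is_eigenvalue A mu -> mu <= lam.

Definition normalized_factors (phi : 'I_n -> bool -> C) : Prop :=
  forall k, phi k false * (phi k false)^* + phi k true * (phi k true)^* = 1.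
Definition prod_state (phi : 'I_n -> bool -> C) : vec :=
  fun x => \prod_(k < n) phi k (x k).

Definition basis_state (s : basis_t) : vec := fun x => (x == s)%:R.

End Heisenberg.

(* Main.v *)
Require Import Defs.
From mathcomp Require Import all_boot all_order all_algebra ring zify.
Set Implicit Arguments. Unset Strict Implicit. Unset Printing Implicit Defensive.
Import Order.TTheory GRing.Theory Num.Theory.
Local Open Scope ring_scope.

Section S.
Variable C : numClosedFieldType.
Variable n : nat.
Local Notation T := (basis_t n).

Definition xo (x y : T) : T := [ffun k => x k (+) y k].
Definition ind2 (i j : 'I_n) : T := [ffun k => (k == i) || (k == j)].
Definition fl i j x := xo x (ind2 i j).

Lemma eq_prodR (x y : T) : ((x == y)%:R : C) = \prod_k ((x k == y k)%:R : C).
Proof.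
case: eqP => [->|ne]; first by rewrite big1 // => k _; rewrite eqxx.
have [k hk] : exists k, x k != y k.
  case: (boolP [exists k, x k != y k]) => [/existsP //|/existsPn h]; exfalso.
  by apply: ne; apply/ffunP => k; apply/eqP; move: (h k); rewrite negbK.
by rewrite (bigD1 k) //= (negbTE hk) mul0r.
Qed.

Lemma prod2 (F : 'I_n -> C) i j : i != j ->
  \prod_k F k = F i * F j * \prod_(k < n | (k != i) && (k != j)) F k.
Proof.
move=> ij; rewrite (bigD1 i) //= (bigD1 j) 1?eq_sym //= mulrA.
congr (_ * _); apply: eq_bigl => k; by rewrite andbC.
Qed.

Lemma hterm_eq (i j : 'I_n) (x y : T) : i != j ->
  hterm C i j x y = (x == y)%:R * (x i != x j)%:R - (y == fl i j x)%:R * (x i != x j)%:R.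
Proof.
move=> ij; rewrite /hterm /op2 /idop.
rewrite eq_prodR (prod2 _ ij).
rewrite (eq_prodR y) (prod2 _ ij).
have -> : \prod_(k < n | (k != i) && (k != j)) ((y k == fl i j x k)%:R : C) =
          \prod_(k < n | (k != i) && (k != j)) ((x k == y k)%:R : C).
  apply: eq_bigr => k /andP[ki kj]; rewrite /fl /xo /ind2 !ffunE (negbTE ki) (negbTE kj) /=.
  by rewrite addbF eq_sym.
set R := \prod_(_ < _ | _) _.
rewrite /fl /xo /ind2 !ffunE !eqxx orbT /=.
case: (x i); case: (y i); case: (x j); case: (y j);
 rewrite /pauliX /pauliY /pauliZ /= ?mulNr ?mulrN -?expr2 ?sqrCi; field.
all: done.
Qed.

Lemma sum_pickL (a : T) (c : C) (F : T -> C) :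
  \sum_y (a == y)%:R * c * F y = c * F a.
Proof.
rewrite (bigD1 a) //= eqxx big1 ?addr0 ?mul1r // => y ya.
by rewrite eq_sym (negbTE ya) !mul0r.
Qed.

Lemma sum_pickR (a : T) (c : C) (F : T -> C) :
  \sum_y (y == a)%:R * c * F y = c * F a.
Proof. by rewrite -(sum_pickL a); apply: eq_bigr => y _; rewrite eq_sym. Qed.

Variable e : rel 'I_n.
Hypothesis e_sym : symmetric e.
Hypothesis e_irr : irreflexive e.

Definition nrm (u : vec C n) := \sum_x (u x)^* * u x.
Definition Fe (u : vec C n) (i j : 'I_n) :=
  \sum_(x : T) (x i != x j)%:R * ((u x)^* * u x - (u x)^* * u (fl i j x)).

Lemma edge_neq (p : 'I_n * 'I_n) : p \in edges e -> p.1 != p.2.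
Proof. by rewrite inE => /andP[lt _]; rewrite neq_ltn lt. Qed.

Lemma qH (u : vec C n) :
  \sum_x (u x)^* * apply (HG C e) u x = \sum_(p in edges e) Fe u p.1 p.2.
Proof.
transitivity (\sum_x \sum_(p in edges e) (u x)^* * \sum_y hterm C p.1 p.2 x y * u y).
  apply: eq_bigr => x _; rewrite /apply /HG -big_distrr /=; congr (_ * _).
  under eq_bigr do rewrite mulr_suml.
  by rewrite exchange_big.
rewrite exchange_big; apply: eq_bigr => p /edge_neq ij; rewrite /Fe.
apply: eq_bigr => x _.
under eq_bigr do rewrite hterm_eq // mulrBl.
rewrite sumrB sum_pickL sum_pickR; ring.
Qed.


Definition zs (b : bool) : C := if b then -1 else 1.
Definition chi (t x : T) : C := \prod_k zs (t k && x k).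
Definition z0 : T := [ffun _ => false].
Definition wt (u : vec C n) (t : T) := \sum_x chi t x * u x.

Lemma chiC t x : chi t x = chi x t.
Proof. by apply: eq_bigr => k _; rewrite andbC. Qed.

Lemma chiM t x y : chi t x * chi t y = chi t (xo x y).
Proof.
rewrite /chi -big_split; apply: eq_bigr => k _ /=; rewrite ffunE.
by case: (t k); case: (x k); case: (y k); rewrite /zs /= ?mulr1 ?mul1r ?mulrNN ?mulr1.
Qed.

Lemma chi_conj t x : (chi t x)^* = chi t x.
Proof.
rewrite rmorph_prod; apply: eq_bigr => k _.
by case: (_ && _); rewrite /zs ?rmorphN rmorph1.
Qed.

Lemma chi0 t : chi t z0 = 1.
Proof. by rewrite /chi big1 // => k _; rewrite ffunE andbF. Qed.

Lemma xoK a : involutive (xo ^~ a).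
Proof. by move=> x; apply/ffunP => k; rewrite !ffunE; case: (x k); case: (a k). Qed.

Lemma card_T : #|{: T}| = (2 ^ n)%N.
Proof. by rewrite card_ffun card_bool card_ord. Qed.

Lemma chi_sum c : \sum_t chi t c = if c == z0 then (2 ^ n)%:R else 0.
Proof.
case: eqP => [->|].
  under eq_bigr do rewrite chi0.
  by rewrite sumr_const card_T.
move=> ne.
have [k hk] : exists k, c k.
  case: (boolP [exists k, c k]) => [/existsP //|/existsPn h]; exfalso.
  by apply: ne; apply/ffunP => k; rewrite ffunE; apply/negbTE/h.
set ek : T := [ffun l => l == k].
have hek : chi c ek = -1.
  rewrite /chi (bigD1 k) //= big1 ?mulr1.
    by rewrite ffunE eqxx hk.
  by move=> l lk; rewrite ffunE (negbTE lk) andbF.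
set S := \sum_t _.
have : S = - S.
  rewrite {1}/S (reindex_inj (inv_inj (xoK ek))) /= /S -sumrN.
  apply: eq_bigr => t _; rewrite chiC -chiM hek chiC; ring.
move/eqP; rewrite -subr_eq0 opprK -mulr2n mulrn_eq0 /=.
by move/eqP.
Qed.

Lemma xo_z0 (x y a : T) : (xo (xo x y) a == z0) = (y == xo x a).
Proof.
apply/eqP/eqP => h; apply/ffunP => k.
  by move/ffunP: h => /(_ k); rewrite !ffunE; case: (x k); case: (y k); case: (a k).
by rewrite h !ffunE; case: (x k); case: (a k).
Qed.

Lemma fourier (u : vec C n) a :
  \sum_t (wt u t)^* * wt u t * chi t a = (2 ^ n)%:R * \sum_x (u x)^* * u (xo x a).
Proof.
transitivity (\sum_x \sum_y (u x)^* * u y * \sum_t chi t (xo (xo x y) a)).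
  rewrite /wt.
  under eq_bigr do rewrite rmorph_sum /= mulr_suml mulr_suml.
  rewrite exchange_big; apply: eq_bigr => x _.
  under eq_bigr do rewrite mulr_sumr mulr_suml.
  rewrite exchange_big; apply: eq_bigr => y _.
  rewrite mulr_sumr; apply: eq_bigr => t _.
  rewrite rmorphM /= (chi_conj t x) -!chiM; ring.
rewrite mulr_sumr; apply: eq_bigr => x _.
under eq_bigr do rewrite chi_sum xo_z0.
rewrite (bigD1 (xo x a)) //= eqxx big1 ?addr0; first ring.
by move=> y /negbTE ->; rewrite mulr0.
Qed.


Definition cutn (x : T) : nat := (\sum_(p in edges e) (x p.1 != x p.2))%N.
Definition MC : nat := (\max_(s : T) cutn s)%N.
Definition mm : nat := #|edges e|.
Definition Xs (u : vec C n) := \sum_(p in edges e) \sum_(x : T) (u x)^* * u (fl p.1 p.2 x).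

Lemma chi_ind2 t (i j : 'I_n) : i != j -> chi t (ind2 i j) = 1 - 2 * (t i != t j)%:R.
Proof.
move=> ij; rewrite /chi (prod2 _ ij) big1 ?mulr1.
  rewrite !ffunE !eqxx ?orbT /=.
  by case: (t i); case: (t j); rewrite /zs /=; ring.
by move=> k /andP[ki kj]; rewrite ffunE (negbTE ki) (negbTE kj) andbF.
Qed.

Lemma parseval (u : vec C n) : (2 ^ n)%:R * nrm u = \sum_t (wt u t)^* * wt u t.
Proof.
rewrite /nrm; have := fourier u z0.
under eq_bigr do rewrite chi0 mulr1.
move=> ->; congr (_ * _); apply: eq_bigr => x _.
by congr (_ * u _); apply/ffunP => k; rewrite !ffunE addbF.
Qed.

Lemma cut_le t : (cutn t <= MC)%N.
Proof. rewrite /MC; exact: (@leq_bigmax _ (fun s : T => cutn s) t). Qed.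

Lemma Xbound (u : vec C n) : (mm%:R - 2 * MC%:R) * nrm u <= Xs u.
Proof.
have key : (2 ^ n)%:R * Xs u =
    \sum_t (wt u t)^* * wt u t * (mm%:R - 2 * (cutn t)%:R).
  rewrite /Xs mulr_sumr.
  transitivity (\sum_(p in edges e) \sum_t (wt u t)^* * wt u t * chi t (ind2 p.1 p.2)).
    by apply: eq_bigr => p _; rewrite fourier.
  rewrite exchange_big; apply: eq_bigr => t _.
  rewrite -mulr_sumr; congr (_ * _).
  under eq_bigr => p hp do rewrite (chi_ind2 _ (edge_neq hp)).
  rewrite sumrB sumr_const /cutn natr_sum mulr_sumr.
  by congr (_ - _); apply: eq_bigr => p _; rewrite natrM.
have h2 : (0 : C) < (2 ^ n)%:R by rewrite ltr0n expn_gt0.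
rewrite -(ler_pM2l h2) key mulrCA parseval mulr_sumr.
apply: ler_sum => t _; rewrite mulrC; apply: ler_wpM2l.
  by rewrite mulrC mul_conjC_ge0.
apply: lerB => //; apply: ler_wpM2l => //; rewrite ler_nat; exact: cut_le.
Qed.


Definition pp (x : T) : C := \prod_k (if x k then 'i else 1).
Definition ph (u : vec C n) : vec C n := fun x => pp x * u x.

Lemma pp_norm x : (pp x)^* * pp x = 1.
Proof.
rewrite /pp rmorph_prod -big_split big1 // => k _ /=.
case: (x k); rewrite ?rmorph1 ?mulr1 // conjCi mulNr -expr2 sqrCi opprK //.
Qed.

Lemma pp_fl x (i j : 'I_n) : i != j -> (pp x)^* * pp (fl i j x) = - (zs (x i) * zs (x j)).
Proof.
move=> ij; rewrite /pp rmorph_prod -big_split /= (prod2 _ ij) big1 ?mulr1.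
  rewrite /fl /xo /ind2 !ffunE !eqxx ?orbT /=.
  by case: (x i); case: (x j); rewrite /zs /= ?rmorph1 ?conjCi ?mulNr ?mulrN ?mul1r ?mulr1 -?expr2 ?sqrCi ?opprK.
move=> k /andP[ki kj]; rewrite /fl /xo /ind2 !ffunE (negbTE ki) (negbTE kj) /= addbF.
case: (x k); rewrite ?rmorph1 ?mulr1 // conjCi mulNr -expr2 sqrCi opprK //.
Qed.

Lemma nrm_ph u : nrm (ph u) = nrm u.
Proof.
apply: eq_bigr => x _; rewrite /ph rmorphM /=.
by rewrite mulrACA pp_norm mul1r.
Qed.

Lemma cut_term (u : vec C n) (i j : 'I_n) : i != j ->
  \sum_(x : T) (x i != x j)%:R * ((u x)^* * u (fl i j x)) =
  2^-1 * (\sum_(x : T) (u x)^* * u (fl i j x) + \sum_(x : T) (ph u x)^* * ph u (fl i j x)).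
Proof.
move=> ij; rewrite -big_split mulr_sumr; apply: eq_bigr => x _ /=.
rewrite /ph rmorphM /= mulrACA pp_fl //.
by case: (x i); case: (x j); rewrite /zs /=; field.
Qed.

Lemma B1 (u : vec C n) :
  \sum_(p in edges e) Fe u p.1 p.2 <= ((3 * MC)%:R - mm%:R) * nrm u.
Proof.
rewrite /Fe.
under eq_bigr do (under eq_bigr do rewrite mulrBr; rewrite sumrB).
rewrite sumrB.
have h1 : \sum_(p in edges e) \sum_(x : T) (x p.1 != x p.2)%:R * ((u x)^* * u x) <= MC%:R * nrm u.
  rewrite exchange_big /nrm mulr_sumr; apply: ler_sum => x _.
  rewrite -mulr_suml; apply: ler_wpM2r; first by rewrite mulrC mul_conjC_ge0.
  by rewrite -natr_sum ler_nat cut_le.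
have h2 : (mm%:R - 2 * MC%:R) * nrm u <=
   \sum_(p in edges e) \sum_(x : T) (x p.1 != x p.2)%:R * ((u x)^* * u (fl p.1 p.2 x)).
  under eq_bigr => p hp do rewrite (cut_term _ (edge_neq hp)).
  rewrite -mulr_sumr big_split /= -/(Xs u) -/(Xs (ph u)).
  have := lerD (Xbound u) (Xbound (ph u)); rewrite nrm_ph => h.
  have h2 : (0 : C) <= 2^-1 by rewrite invr_ge0.
  apply: le_trans (ler_wpM2l h2 h); rewrite le_eqVlt; apply/orP; left; apply/eqP.
  by field.
have h3 := lerB h1 h2.
apply: le_trans h3 _; rewrite le_eqVlt; apply/orP; left; apply/eqP.
rewrite natrM; ring.
Qed.


Lemma sym_sum (G : 'I_n -> 'I_n -> C) (hG : forall i j, G i j = G j i) :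
  \sum_i \sum_(j | e i j) G i j = 2 * \sum_(p in edges e) G p.1 p.2.
Proof.
rewrite pair_big_dep /= (bigID (fun p : 'I_n * 'I_n => (p.1 < p.2)%N)) /=.
have E1 : \sum_(p | e p.1 p.2 && (p.1 < p.2)%N) G p.1 p.2 = \sum_(p in edges e) G p.1 p.2.
  by apply: eq_bigl => p; rewrite inE andbC.
have sw : involutive (fun p : 'I_n * 'I_n => (p.2, p.1)) by case.
have E2 : \sum_(p | e p.1 p.2 && ~~ (p.1 < p.2)%N) G p.1 p.2 = \sum_(p in edges e) G p.1 p.2.
  rewrite (reindex_inj (inv_inj sw)) /=.
  apply: eq_big => [[a b]|[a b] _] /=; last by rewrite hG.
  rewrite inE /= e_sym -leqNgt.
  case: (boolP (e a b)) => eab; rewrite ?andbF ?andbT //.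
  have ab : a != b by apply: contraTneq eab => ->; rewrite e_irr.
  by rewrite ltn_neqAle ab.
rewrite E1 E2; ring.
Qed.

Section Star.
Variable i : 'I_n.
Definition dg : nat := (\sum_(j | e i j) 1)%N.
Definition Dn (x : T) : nat := (\sum_(j | e i j) (x i != x j))%N.
Definition wn (x : T) : nat := (dg.+1 - Dn x)%N.

Lemma Dn_le (x : T) : (Dn x <= dg)%N.
Proof. by apply: leq_sum => j _; rewrite leq_b1. Qed.

Lemma eij_neq j : e i j -> i != j.
Proof. by move=> eij; apply: contraTneq eij => <-; rewrite e_irr. Qed.

Lemma Dn_fl j (x : T) : e i j -> x i != x j -> (Dn (fl i j x) + Dn x = dg.+1)%N.
Proof.
move=> eij xij; have ij := eij_neq eij.
rewrite /Dn /dg -big_split /= (bigD1 j) //= [in RHS](bigD1 j) //=.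
have -> : (\sum_(l | e i l && (l != j)) ((fl i j x i != fl i j x l) + (x i != x l)))%N =
          (\sum_(l | e i l && (l != j)) 1)%N.
  apply: eq_bigr => l /andP[eil lj].
  have li : l != i by rewrite eq_sym; exact: eij_neq.
  rewrite /fl /xo /ind2 !ffunE (negbTE li) (negbTE lj) eqxx /= addbF addbT.
  by case: (x i); case: (x l).
rewrite /fl /xo /ind2 !ffunE !eqxx orbT /= !addbT xij.
have -> : (~~ x i != ~~ x j) = true by case: (x i) xij; case: (x j).
lia.
Qed.

Lemma Dn_pos j (x : T) : e i j -> x i != x j -> (0 < Dn x)%N.
Proof. by move=> eij xij; rewrite /Dn (bigD1 j) //= xij. Qed.

Lemma flK j : involutive (fl i j).
Proof. by move=> x; rewrite /fl xoK. Qed.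

Lemma fl_cut j (x : T) : (fl i j x i != fl i j x j) = (x i != x j).
Proof.
case: (eqVneq i j) => [->|ij]; first by rewrite !eqxx.
rewrite /fl /xo /ind2 !ffunE !eqxx orbT /= !addbT.
by case: (x i); case: (x j).
Qed.

Lemma amgm (A B : nat) (a b : C) : (0 < A)%N -> (0 < B)%N ->
  0 <= A%:R / B%:R * (a^* * a) + a^* * b + (B%:R / A%:R * (b^* * b) + b^* * a).
Proof.
move=> A0 B0.
have nA : (A%:R : C) != 0 by rewrite pnatr_eq0 -lt0n.
have nB : (B%:R : C) != 0 by rewrite pnatr_eq0 -lt0n.
have -> : A%:R / B%:R * (a^* * a) + a^* * b + (B%:R / A%:R * (b^* * b) + b^* * a) =
   (A%:R * B%:R)^-1 * ((A%:R * a + B%:R * b)^* * (A%:R * a + B%:R * b)).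
  rewrite rmorphD !rmorphM /= !conjC_nat; field; by rewrite nA nB.
apply: mulr_ge0; first by rewrite invr_ge0 mulr_ge0 ?ler0n.
by rewrite mulrC mul_conjC_ge0.
Qed.

Definition Tj (u : vec C n) j (x : T) : C := (x i != x j)%:R *
  ((wn x)%:R / (Dn x)%:R * ((u x)^* * u x) + (u x)^* * u (fl i j x)).

Lemma pair_nonneg u j : e i j -> 0 <= \sum_x Tj u j x.
Proof.
move=> eij; set R := \sum_x _.
have : R + R = \sum_x (Tj u j x + Tj u j (fl i j x)).
  by rewrite {2}/R (reindex_inj (inv_inj (flK j))) -big_split.
rewrite -mulr2n => h; rewrite -(pmulrn_lge0 _ (isT : (0 < 2)%N)) h.
apply: sumr_ge0 => x _; rewrite /Tj fl_cut flK.
case: (boolP (x i != x j)) => xij; last by rewrite !mul0r addr0.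
rewrite !mul1r.
have hD := Dn_fl eij xij; have hp := Dn_pos eij xij; have hl := Dn_le x.
have -> : wn x = Dn (fl i j x) by rewrite /wn; lia.
have -> : wn (fl i j x) = Dn x by rewrite /wn; lia.
apply: amgm => //; lia.
Qed.

Lemma star (u : vec C n) : \sum_(j | e i j) Fe u i j <= (dg.+1)%:R * nrm u.
Proof.
set S := \sum_(j | e i j) \sum_(x : T) (x i != x j)%:R * ((u x)^* * u (fl i j x)).
have eF : \sum_(j | e i j) Fe u i j = \sum_(x : T) (Dn x)%:R * ((u x)^* * u x) - S.
  rewrite /Fe; under eq_bigr do (under eq_bigr do rewrite mulrBr; rewrite sumrB).
  rewrite sumrB; congr (_ - _).
  by rewrite exchange_big; apply: eq_bigr => x _; rewrite -mulr_suml /Dn natr_sum.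
have eT : \sum_(j | e i j) \sum_x Tj u j x =
     \sum_(x : T) (wn x)%:R / (Dn x)%:R * (Dn x)%:R * ((u x)^* * u x) + S.
  rewrite /Tj; under eq_bigr do (under eq_bigr do rewrite mulrDr; rewrite big_split).
  rewrite big_split /=; congr (_ + _).
  rewrite exchange_big; apply: eq_bigr => x _.
  rewrite -mulr_suml /Dn natr_sum; ring.
have hT : 0 <= \sum_(j | e i j) \sum_x Tj u j x.
  by apply: sumr_ge0 => j eij; exact: pair_nonneg.
have le1 : \sum_(x : T) (wn x)%:R / (Dn x)%:R * (Dn x)%:R * ((u x)^* * u x) <=
           \sum_(x : T) (wn x)%:R * ((u x)^* * u x).
  apply: ler_sum => x _; apply: ler_wpM2r; first by rewrite mulrC mul_conjC_ge0.
  case: (eqVneq (Dn x) 0%N) => [->|nz]; first by rewrite mulr0 ler0n.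
  by rewrite divfK // pnatr_eq0.
have hW : 0 <= \sum_(x : T) (wn x)%:R * ((u x)^* * u x) + S.
  by apply: le_trans (lerD le1 (lexx S)); rewrite -eT.
have -> : (dg.+1)%:R * nrm u =
   \sum_(x : T) (Dn x)%:R * ((u x)^* * u x) + \sum_(x : T) (wn x)%:R * ((u x)^* * u x).
  rewrite /nrm mulr_sumr -big_split; apply: eq_bigr => x _ /=.
  have := Dn_le x => hl.
  rewrite -mulrDl -natrD; congr (_%:R * _); rewrite /wn; lia.
rewrite eF lerD2l -subr_ge0 opprK; exact: hW.
Qed.

End Star.

Lemma Fe_sym u a b : Fe u a b = Fe u b a.
Proof.
rewrite /Fe; apply: eq_bigr => x _; rewrite eq_sym.
by congr (_ * (_ - _ * u _)); rewrite /fl /ind2; congr xo; apply/ffunP => k; rewrite !ffunE orbC.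
Qed.

Lemma B2 (u : vec C n) :
  2 * \sum_(p in edges e) Fe u p.1 p.2 <= (2 * mm + n)%:R * nrm u.
Proof.
rewrite -sym_sum; last exact: Fe_sym.
apply: (@le_trans _ _ (\sum_(j < n) (dg j).+1%:R * nrm u)).
  by apply: ler_sum => j _; exact: star.
rewrite -mulr_suml; apply: ler_wpM2r.
  by rewrite /nrm; apply: sumr_ge0 => x _; rewrite mulrC mul_conjC_ge0.
have hd : \sum_(j < n) (dg j)%:R = 2 * (mm%:R : C).
  rewrite /dg; under eq_bigr do rewrite natr_sum.
  rewrite (@sym_sum (fun _ _ => 1) (fun _ _ => erefl)) sumr_const //.
rewrite le_eqVlt; apply/orP; left; apply/eqP.
under eq_bigr do rewrite -addn1 natrD.
rewrite big_split /= hd sumr_const card_ord natrD natrM.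
by [].
Qed.

End S.

Lemma fl_neq n (s : basis_t n) (i j : 'I_n) : (s == fl i j s) = false.
Proof.
apply/negbTE/eqP => h; have := congr1 (fun f : basis_t n => f i) h.
by rewrite /fl /xo /ind2 !ffunE eqxx /=; case: (s i).
Qed.

Lemma energy_basis (C : numClosedFieldType) n (e : rel 'I_n) (s : basis_t n) :
  energy (HG C e) (basis_state C s) = (cutn e s)%:R.
Proof.
rewrite /energy (eq_bigr (fun x => (x == s)%:R * 1 * HG C e x s)); last first.
  move=> x _; rewrite (bigD1 s) //= big1 ?addr0 => [|y ys]; last first.
    by rewrite /basis_state (negbTE ys) mulr0.
  by rewrite /basis_state eqxx conjC_nat !mulr1.
rewrite sum_pickR mul1r.
rewrite /HG /cutn natr_sum; apply: eq_bigr => p hp.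
rewrite (hterm_eq _ _ _ (edge_neq hp)) eqxx mul1r fl_neq mul0r subr0 //.
Qed.

Unset Implicit Arguments.
Set Strict Implicit.

Theorem theorem5 (C : numClosedFieldType) (n : nat) (e : rel 'I_n)
  (e_sym : symmetric e) (e_irr : irreflexive e) (n_pos : (0 < n)%N)
  (e_conn : forall i j : 'I_n, connect e i j)
  (opt : C) (Hopt : is_largest_eigenvalue (HG C e) opt) :
  let ratio : C := 1 / 3 + 2 / 3 *
      ((#|edges e|)%:R / (2 * #|edges e| + n)%:R) in
  (exists phi : 'I_n -> bool -> C, normalized_factors phi /\
       ratio * opt <= energy (HG C e) (prod_state phi)) /\
  (exists s : basis_t n, ratio * opt <= energy (HG C e) (basis_state C s)).
Proof.
move=> ratio.
case: Hopt => [[v [[x0 hx0] hv]] _].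
have qE : \sum_x (v x)^* * apply (HG C e) v x = opt * nrm v.
  by rewrite /nrm mulr_sumr; apply: eq_bigr => x _; rewrite hv; ring.
rewrite qH in qE.
have npos : 0 < nrm v.
  have ha : 0 < (v x0)^* * v x0 by rewrite mulrC mul_conjC_gt0.
  rewrite /nrm (bigD1 x0) //=; apply: lt_le_trans ha _; rewrite lerDl.
  by apply: sumr_ge0 => x _; rewrite mulrC mul_conjC_ge0.
have h1 : opt <= ((3 * MC e)%:R - (mm e)%:R).
  by rewrite -(ler_pM2r npos) -qE; exact: B1.
have h2 : 2 * opt <= (2 * mm e + n)%:R.
  by rewrite -(ler_pM2r npos) -mulrA -qE; exact: B2.
set s := [arg max_(s > x0) cutn e s].
have hs : MC e = cutn e s by rewrite /MC (bigmax_eq_arg _ x0).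
have key : ratio * opt <= energy (HG C e) (basis_state C s).
  rewrite energy_basis -hs -subr_ge0.
  have hD : ((2 * mm e + n)%:R : C) != 0 by rewrite pnatr_eq0; lia.
  move: h1 h2; rewrite /ratio /mm natrM.
  set D := ((2 * _ + n)%:R : C); set M := (MC e)%:R; set m := (#|edges e|)%:R => h1 h2.
  have -> : M - (1 / 3 + 2 / 3 * (m / D)) * opt =
      3^-1 * ((3%:R * M - m) - opt) + 3^-1 * (m / D) * (D - 2 * opt).
    field.
    by move: hD; rewrite natrD natrM.
  apply: addr_ge0; apply: mulr_ge0; rewrite ?subr_ge0 //.
    by rewrite invr_ge0.
  by rewrite !mulr_ge0 ?invr_ge0 ?ler0n.
split; last by exists s.
exists (fun k b => (b == s k)%:R); split.
  by move=> k; rewrite !conjC_nat; case: (s k); rewrite /= ?mulr0 ?mulr1 ?add0r ?addr0.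
suff -> : energy (HG C e) (prod_state (fun k b => (b == s k)%:R)) =
          energy (HG C e) (basis_state C s) by [].
rewrite /energy; apply: eq_bigr => x _; apply: eq_bigr => y _.
by rewrite /prod_state /basis_state -!eq_prodR.
Qed.
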